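(* Let $(v,b)$ satisfy (C2), with associated pair $(\lambda,\varepsilon)$. Let $\mu=v/2$ if $\varepsilon\equiv v/2\pmod 2$ and $\mu=v/2+1$ otherwise. Then every TS$(v;b)$ $(V,\mathcal F)$ satisfies $$\sum_{\{x,y\}\in\binom V2}\lambda_{x,y}^2\ \ge\ \binom v2\lambda^2+2\varepsilon\lambda+\mu,$$ and equality holds for any TS$(v;b)$ in which all $\lambda_{x,y}\in\{\lambda-1,\lambda,\lambda+1\}$ and whose defect graph is isomorphic to $H^0_{v,\varepsilon}$ (when $\varepsilon\equiv v/2\pmod2$) or to one of $H^1_{v,\varepsilon},H^2_{v,\varepsilon},H^3_{v,\varepsilon},H^4_{v,\varepsilon}$ (when $\varepsilon\not\equiv v/2\pmod 2$).
   Context: A triple system TS$(v;b)$ is a pair $(V,\mathcal F)$ where $V$ is a set of $v\ge 3$ points and $\mathcal F$ is a multiset of $b$ 3-subsets of $V$ (blocks); repeated blocks allowed. $\lambda_{x,y}$ is the number of blocks (with multiplicity) containing $\{x,y\}$. The associated pair $(\lambda,\varepsilon)$ of $(v,b)$: integers with $3b=\lambda\binom v2+\varepsilon$, $-v/2<\varepsilon<v/2$. (C2): $v$ even and $\lambda v(v-1)/6-v/6<b<\lambda v(v-1)/6+v/6$ for an odd integer $\lambda$ (this is the $\lambda$ of the associated pair). Defect graph: if all $\lambda_{x,y}\in\{\lambda-1,\lambda,\lambda+1\}$, the defect graph is the graph on $V$ with edges $\{x,y\}$ with $\lambda_{x,y}=\lambda+1$ (labelled $+1$) and with $\lambda_{x,y}=\lambda-1$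 (labelled $-1$); isomorphisms preserve labels. $H^0_{v,\varepsilon}$: perfect matching of $V$ with $(v+2\varepsilon)/4$ edges $+1$ and $(v-2\varepsilon)/4$ edges $-1$. For $1\le i\le 4$, $H^i_{v,\varepsilon}$ is the vertex-disjoint union of a star $K_{1,3}$ and a matching covering the remaining $v-4$ vertices, where: $H^1$: star with two $+1$ and one $-1$ edge, matching with $(v-6+2\varepsilon)/4$ edges $+1$ and $(v-2-2\varepsilon)/4$ edges $-1$; $H^2$: star with one $+1$ and two $-1$ edges, matching with $(v-2+2\varepsilon)/4$ edges $+1$ and $(v-6-2\varepsilon)/4$ edges $-1$; $H^3$: star with three $+1$ edges, matching with $(v-10+2\varepsilon)/4$ edges $+1$ and $(v+2-2\varepsilon)/4$ edges $-1$; $H^4$: star with three $-1$ edges, matching with $(v+2+2\varepsilon)/4$ edges $+1$ and $(v-10-2\varepsilon)/4$ edges $-1$. *)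

(* Defs.v *)
From mathcomp Require Import all_boot all_order all_algebra.
Set Implicit Arguments. Unset Strict Implicit. Unset Printing Implicit Defensive.
Import Order.TTheory GRing.Theory Num.Theory.
Local Open Scope ring_scope.

Section TS.
Variable V : finType.

(* A triple system TS(v;b): point set V (a finite type) with v = #|V| >= 3,
   and a multiset F (a sequence, repetitions allowed) of b = size F blocks,
   each a 3-subset of V. *)
Definition is_TS (v b : nat) (F : seq {set V}) : Prop :=
  [/\ #|V| = v, (3 <= v)%N, size F = b & all (fun B : {set V} => #|B| == 3%N) F].

Definition pairs : {set {set V}} := [set e : {set V} | #|e| == 2%N].

Definition lamp (F : seq {set V}) (e : {set V}) : nat :=
  count (fun B : {set V} => e \subset B) F.

(* label of a pair in the defect graph w.r.t. lambda *)
Definition dlab (F : seq {set V}) (lam : int) (e : {set V}) : int :=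
  (lamp F e)%:Z - lam.

Definition near_balanced (F : seq {set V}) (lam : int) : Prop :=
  forall e, e \in pairs -> dlab F lam e \in [:: -1; 0; 1].

Definition dedges (F : seq {set V}) (lam s : int) : {set {set V}} :=
  [set e in pairs | dlab F lam e == s].

Definition dedges_all (F : seq {set V}) (lam : int) : {set {set V}} :=
  [set e in pairs | dlab F lam e != 0].

Definition ddeg (F : seq {set V}) (lam : int) (x : V) : nat :=
  #|[set e in dedges_all F lam | x \in e]|.

(* defect graph is isomorphic to H^0_{v,eps}: a perfect matching of V with
   (v+2eps)/4 edges labelled +1 and (v-2eps)/4 edges labelled -1 *)
Definition defect_is_H0 (F : seq {set V}) (lam : int) (v : nat) (eps : int)
  : Prop :=
  [/\ forall x, ddeg F lam x = 1%N,
      4 * (#|dedges F lam 1|)%:Z = v%:Z + 2 * eps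
    & 4 * (#|dedges F lam (-1)|)%:Z = v%:Z - 2 * eps].

(* defect graph is the vertex-disjoint union of a star K_{1,3} (center c)
   with sp edges labelled +1 and sm edges labelled -1, and a matching covering
   the remaining v-4 vertices with np edges +1 and nm edges -1, where
   4*np = cp and 4*nm = cm. *)
Definition defect_is_star_matching (F : seq {set V}) (lam : int)
  (sp sm : nat) (cp cm : int) : Prop :=
  exists c : V,
  [/\ ddeg F lam c = 3%N,
      forall x, x != c -> ddeg F lam x = 1%N,
      (#|[set e in dedges F lam 1 | c \in e]| = sp /\
       #|[set e in dedges F lam (-1) | c \in e]| = sm),
      4 * (#|[set e in dedges F lam 1 | c \notin e]|)%:Z = cp
    & 4 * (#|[set e in dedges F lam (-1) | c \notin e]|)%:Z = cm].

Definition defect_is_H1 F lam (v : nat) (eps : int) :=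
  defect_is_star_matching F lam 2 1 (v%:Z - 6 + 2 * eps) (v%:Z - 2 - 2 * eps).
Definition defect_is_H2 F lam (v : nat) (eps : int) :=
  defect_is_star_matching F lam 1 2 (v%:Z - 2 + 2 * eps) (v%:Z - 6 - 2 * eps).
Definition defect_is_H3 F lam (v : nat) (eps : int) :=
  defect_is_star_matching F lam 3 0 (v%:Z - 10 + 2 * eps) (v%:Z + 2 - 2 * eps).
Definition defect_is_H4 F lam (v : nat) (eps : int) :=
  defect_is_star_matching F lam 0 3 (v%:Z + 2 + 2 * eps) (v%:Z - 10 - 2 * eps).

Definition sumsq (F : seq {set V}) : int :=
  \sum_(e in pairs) ((lamp F e)%:Z) ^+ 2.

End TS.

Definition assoc_pair (v b : nat) (lam eps : int) : Prop :=
  [/\ (3 * b)%:Z = lam * ('C(v, 2))%:Z + eps,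
      - (v%:Z) < 2 * eps & 2 * eps < v%:Z].

(* condition (C2) (in terms of the associated lambda, multiplied by 6):
   v even, lam odd, lam v(v-1) - v < 6b < lam v(v-1) + v *)
Definition C2 (v b : nat) (lam : int) : Prop :=
  [/\ ~~ odd v, (2 %| lam - 1)%Z,
      lam * (v * (v - 1))%:Z - v%:Z < (6 * b)%:Z
    & (6 * b)%:Z < lam * (v * (v - 1))%:Z + v%:Z].

Definition eps_cong (v : nat) (eps : int) : bool :=
  (2 %| eps - (v %/ 2)%:Z)%Z.

Definition mu (v : nat) (eps : int) : int :=
  if eps_cong v eps then (v %/ 2)%:Z else (v %/ 2)%:Z + 1.

(* Main.v *)
Require Import Defs.
From mathcomp Require Import all_boot all_order all_algebra zify ring lra.
Import Order.TTheory GRing.Theory Num.Theory.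
Local Open Scope ring_scope.



Lemma card_sel (T : finType) (A : {set T}) (P : pred T) :
  #|[set e in A | P e]| = (\sum_(e in A) (P e : nat))%N.
Proof.
rewrite -sum1_card big_mkcond /= [RHS]big_mkcond /=.
apply: eq_bigr => i _; rewrite !inE; by case: (i \in A); case: (P i).
Qed.

Lemma card_pairs_with (V : finType) (A : {set V}) (x : V) : x \in A ->
  #|[set e : {set V} | e \subset A & (#|e| == 2%N) && (x \in e)]| = (#|A| - 1)%N.
Proof.
move=> xA.
have -> : [set e : {set V} | e \subset A & (#|e| == 2%N) && (x \in e)] =
  [set e : {set V} | e \subset A & #|e| == 2%N] :\: [set e : {set V} | e \subset A :\ x & #|e| == 2%N].
  apply/setP => e; rewrite !inE subsetD1.
  by case: (e \subset A); case: (#|e| == 2%N); case: (x \in e).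
rewrite cardsDS; last first.
  by apply/subsetP => e; rewrite !inE subsetD1 => /andP[/andP[-> _] ->].
rewrite !cards_draws (cardsD1 x A) xA /=.
case: #|A :\ x| => [|m]; first by [].
by rewrite add1n subn1 /= binS bin1 addKn.
Qed.

Lemma sum_lamp (V : finType) (F : seq {set V}) (P : {set {set V}}) :
  (\sum_(e in P) lamp F e = \sum_(B <- F) #|[set e in P | e \subset B]|)%N.
Proof.
rewrite /lamp.
under eq_bigr => e _ do rewrite -sum1_count big_mkcond /=.
rewrite exchange_big /=; apply: eq_bigr => B _.
rewrite card_sel; apply: eq_bigr => e _; by case: (e \subset B).
Qed.

Lemma total_lamp (V : finType) (F : seq {set V}) :
  all (fun B : {set V} => #|B| == 3%N) F ->
  (\sum_(e in pairs V) lamp F e = 3 * size F)%N.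
Proof.
move=> hF; rewrite sum_lamp.
rewrite (eq_big_seq (fun _ => 3%N)); last first.
  move=> B BF; move/allP: hF => /(_ B BF) /eqP h3.
  have -> : [set e in pairs V | e \subset B] = [set e : {set V} | e \subset B & #|e| == 2%N].
    by apply/setP => e; rewrite !inE andbC.
  by rewrite cards_draws h3.
by rewrite big_const_seq count_predT iter_addn_0 mulnC.
Qed.

Lemma vertex_lamp_even (V : finType) (F : seq {set V}) (x : V) :
  all (fun B : {set V} => #|B| == 3%N) F ->
  (2 %| \sum_(e in [set e in pairs V | x \in e]) lamp F e)%N.
Proof.
move=> hF; rewrite sum_lamp big_seq; apply: dvdn_sum => B BF.
case xB: (x \in B).
  move/allP: hF => hF.
  have -> : [set e in [set e in pairs V | x \in e] | e \subset B] =
     [set e : {set V} | e \subset B & (#|e| == 2%N) && (x \in e)].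
    by apply/setP => e; rewrite /pairs !inE; case: (e \subset B); case: (#|e| == 2%N); case: (x \in e).
  by rewrite card_pairs_with // (eqP (hF B BF)).
have -> : [set e in [set e in pairs V | x \in e] | e \subset B] = set0.
  apply/setP => e; rewrite !inE; apply/negP => /andP[/andP[_ xe] /subsetP eB].
  by rewrite (eB _ xe) in xB.
by rewrite cards0.
Qed.

Lemma card_Ex (V : finType) (x : V) :
  #|[set e in pairs V | x \in e]| = (#|V| - 1)%N.
Proof.
rewrite -cardsT -(@card_pairs_with V setT x (in_setT x)).
by apply: eq_card => e; rewrite /pairs !inE subsetT.
Qed.

Lemma sumZ (V:finType) (f : V -> nat) (A : {set V}) :
  (\sum_(e in A) (f e)%:Z) = (\sum_(e in A) f e)%N%:Z.
Proof. rewrite -natz natr_sum. apply: eq_bigr => i _. by rewrite natz. Qed.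

Lemma sumC (V:finType) (A : {set V}) (l:int) : \sum_(e in A) l = #|A|%:Z * l.
Proof. by rewrite sumr_const -mulr_natl natz. Qed.

Lemma handshake (V : finType) (D : {set {set V}}) : D \subset pairs V ->
  (\sum_(x : V) #|[set e in D | x \in e]| = 2 * #|D|)%N.
Proof.
move=> /subsetP DP.
under eq_bigr => x _ do rewrite card_sel.
rewrite exchange_big /=.
rewrite (eq_bigr (fun _ => 2%N)); last first.
  move=> e eD; have := DP e eD; rewrite /pairs inE => /eqP <-.
  rewrite -sum1_card [RHS]big_mkcond /=; apply: eq_bigr => x _; by case: (x \in e).
by rewrite sum_nat_const mulnC.
Qed.

Lemma card_pairs (V : finType) : #|pairs V| = 'C(#|V|, 2).
Proof. by rewrite /pairs card_draws. Qed.

Lemma sumsq_split (V : finType) (F : seq {set V}) v b lam eps :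
  is_TS v b F -> assoc_pair v b lam eps ->
  sumsq F = ('C(v, 2))%:Z * lam ^+ 2 + 2 * eps * lam
            + \sum_(e in pairs V) (dlab F lam e) ^+ 2.
Proof.
move=> [hv _ hb hF] [h3 _ _].
have hs : \sum_(e in pairs V) dlab F lam e = eps.
  rewrite /dlab sumrB sumZ sumC total_lamp // hb card_pairs hv h3.
  ring.
rewrite /sumsq.
rewrite (eq_bigr (fun e => lam ^+ 2 + 2 * lam * dlab F lam e + dlab F lam e ^+ 2)); last first.
  by move=> e _; rewrite /dlab; ring.
rewrite !big_split /= sumC -mulr_sumr hs card_pairs hv; ring.
Qed.

Lemma sum_dlab (V : finType) (F : seq {set V}) v b lam eps :
  is_TS v b F -> assoc_pair v b lam eps ->
  \sum_(e in pairs V) dlab F lam e = eps.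
Proof.
move=> [hv _ hb hF] [h3 _ _].
rewrite /dlab sumrB sumZ sumC total_lamp // hb card_pairs hv h3; ring.
Qed.

Lemma S_ge_N (V : finType) (F : seq {set V}) lam :
  #|dedges_all F lam|%:Z <= \sum_(e in pairs V) (dlab F lam e) ^+ 2.
Proof.
rewrite (bigID (fun e => dlab F lam e != 0)) /=.
apply: ler_wpDr; first by apply: sumr_ge0 => e _; rewrite sqr_ge0.
apply: (@le_trans _ _ (\sum_(e in pairs V | dlab F lam e != 0) 1)).
  have -> : \sum_(e in pairs V | dlab F lam e != 0) (1:int) = #|dedges_all F lam|%:Z * 1.
    by rewrite -sumC; apply: eq_bigl => e; rewrite /dedges_all !inE.
  by rewrite mulr1.
apply: ler_sum => e /andP[_ h]; move: h; set d := dlab F lam e; nia.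
Qed.

Lemma ddeg_pos (V : finType) (F : seq {set V}) v b lam (x : V) :
  is_TS v b F -> C2 v b lam -> (0 < ddeg F lam x)%N.
Proof.
move=> [hv hv3 hb hF] [hodd hlam _ _].
rewrite /ddeg card_gt0; apply/negP => /eqP H0.
have hz : forall e, e \in [set e in pairs V | x \in e] -> (lamp F e)%:Z = lam.
  move=> e; rewrite inE => /andP[ep xe].
  apply/eqP; rewrite -subr_eq0; apply/negPn/negP => hne.
  move: ep; rewrite /pairs inE => ep.
  have : e \in (set0 : {set {set V}}) by rewrite -H0 /dedges_all /pairs !inE ep xe /dlab hne.
  by rewrite inE.
have := @vertex_lamp_even V F x hF => /dvdnP [k hk].
have : (\sum_(e in [set e in pairs V | x \in e]) (lamp F e)%:Z) = (k * 2)%N%:Z.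
  by rewrite sumZ hk.
rewrite (eq_bigr (fun _ => lam)) //= sumC card_Ex hv.
case/dvdzP: hlam => m hm.
have hv2 := odd_double_half v; rewrite (negbTE hodd) add0n in hv2.
have hvv : ((v - 1)%N%:Z) = 2 * ((v./2)%:Z - 1) + 1.
  rewrite -{1}hv2 -muln2. lia.
rewrite hvv.
have hl : lam = 2 * m + 1 by lia.
rewrite hl.
set n := (v./2)%:Z - 1.
have -> : (2 * n + 1) * (2 * m + 1) = 2 * (2 * n * m + n + m) + 1 by ring.
set t := n * m; lia.
Qed.

Lemma dedges_sub (V : finType) (F : seq {set V}) lam : dedges_all F lam \subset pairs V.
Proof. by apply/subsetP => e; rewrite /dedges_all inE => /andP[]. Qed.

Lemma lower (V : finType) (F : seq {set V}) v b lam eps :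
  is_TS v b F -> C2 v b lam -> assoc_pair v b lam eps ->
  mu v eps <= \sum_(e in pairs V) (dlab F lam e) ^+ 2.
Proof.
move=> hT hC hA.
have hN : (v <= 2 * #|dedges_all F lam|)%N.
  rewrite -handshake ?dedges_sub //.
  case: (hT) => hv _ _ _; rewrite -hv -sum1_card.
  apply: leq_sum => x _; exact: ddeg_pos hT hC.
have hS := @S_ge_N V F lam.
have hP : (2 %| \sum_(e in pairs V) (dlab F lam e) ^+ 2 - eps)%Z.
  rewrite -(@sum_dlab V F v b lam eps hT hA) -sumrB; apply: rpred_sum => e _.
  set d := dlab F lam e.
  have -> : d ^+ 2 - d = d * (d - 1) by ring.
  have [h|h] : (2 %| d)%Z \/ (2 %| d - 1)%Z by lia.
    exact: dvdz_mulr.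
  exact: dvdz_mull.
move: hS hP; set S := \sum_(e in pairs V) _ => hS hP.
rewrite /mu /eps_cong; case: ifP => hc.
  lia.
move/negbT: hc => hc; lia.
Qed.

Lemma S_eq_N (V : finType) (F : seq {set V}) lam :
  near_balanced F lam ->
  \sum_(e in pairs V) (dlab F lam e) ^+ 2 = #|dedges_all F lam|%:Z.
Proof.
move=> hnb.
rewrite (bigID (fun e => dlab F lam e != 0)) /=.
rewrite [X in _ + X]big1 ?addr0; last first.
  by move=> e /andP[_ /negPn /eqP ->]; rewrite expr2 mulr0.
rewrite (eq_bigr (fun _ => 1)); last first.
  move=> e /andP[ep hne]; have := hnb e ep; move: hne.
  set d := dlab F lam e; rewrite !inE => hne.
  clearbody d; case/or3P => /eqP hd; rewrite hd in hne *; by [] || by rewrite sqrrN expr1n.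
rewrite -[#|_|%:Z]mulr1 -sumC; apply: eq_bigl => e; by rewrite /dedges_all !inE.
Qed.

Lemma star_sum (V : finType) (F : seq {set V}) lam sp sm cp cm :
  defect_is_star_matching F lam sp sm cp cm ->
  (\sum_(x : V) ddeg F lam x = #|V| + 2)%N.
Proof.
case=> c [h3 h1 _ _ _].
rewrite (bigD1 c) //= h3 (eq_bigr (fun _ => 1%N)); last by move=> x /h1.
rewrite sum1_card cardC1.
have : (0 < #|V|)%N by apply/card_gt0P; exists c.
case: #|V| => // n _ /=; lia.
Qed.

Lemma eq_part (V : finType) (F : seq {set V}) v b lam eps :
  is_TS v b F -> assoc_pair v b lam eps -> near_balanced F lam ->
  (if eps_cong v eps then defect_is_H0 F lam v eps
   else [\/ defect_is_H1 F lam v eps, defect_is_H2 F lam v eps,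
            defect_is_H3 F lam v eps | defect_is_H4 F lam v eps]) ->
  sumsq F = ('C(v, 2))%:Z * lam ^+ 2 + 2 * eps * lam + mu v eps.
Proof.
move=> hT hA hnb hd.
rewrite (@sumsq_split V F v b lam eps hT hA) (@S_eq_N V F lam hnb); congr (_ + _).
have hsh := @handshake V (dedges_all F lam) (@dedges_sub V F lam).
case: (hT) => hv _ _ _.
move: hd; rewrite /mu; case: ifP => _.
  case=> hdeg _ _.
  rewrite (eq_bigr (fun _ => 1%N)) in hsh; last by move=> x _; exact: hdeg.
  have hv1 : (\sum_(x : V) 1 = v)%N by rewrite -hv -sum1_card.
  rewrite hv1 in hsh; lia.
case=> [h|h|h|h]; have := @star_sum V F lam _ _ _ _ h; rewrite /ddeg hsh; lia.
Qed.

Theorem lemma2p2 (v b : nat) (lam eps : int) :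
  C2 v b lam -> assoc_pair v b lam eps ->
  (forall (V : finType) (F : seq {set V}), is_TS v b F ->
     sumsq F >= ('C(v, 2))%:Z * lam ^+ 2 + 2 * eps * lam + mu v eps) /\
  (forall (V : finType) (F : seq {set V}), is_TS v b F ->
     near_balanced F lam ->
     (if eps_cong v eps then defect_is_H0 F lam v eps
      else [\/ defect_is_H1 F lam v eps, defect_is_H2 F lam v eps,
               defect_is_H3 F lam v eps | defect_is_H4 F lam v eps]) ->
     sumsq F = ('C(v, 2))%:Z * lam ^+ 2 + 2 * eps * lam + mu v eps).
Proof.
move=> hC hA; split.
  move=> V F hT; rewrite (@sumsq_split V F v b lam eps hT hA) lerD2l.
  exact: (@lower V F v b lam eps hT hC hA).
move=> V F hT hnb hd; exact: (@eq_part V F v b lam eps hT hA hnb hd).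
Qed.
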